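(* Let $G$ be a finite group with identity $e$ and let $S\subseteq G\setminus\{e\}$ with $|S|=k\le 4$, such that some ordering of the elements of $S$ has product different from $e$. Suppose $S$ is not of either of the following forms: (i) $|S|=4$ and $S=\{x,x^{-1},y,z\}$ for elements with $xyz=x^{-1}zy=e$; (ii) $|S|=4$ and $S=\{w,x,y,z\}$ for elements with $wxy=wyz=wzx=xzy=e$. Then there is an ordering of the elements of $S$ whose partial products are pairwise distinct, i.e. $G$ has an $S$-sequencing.
   Context: For a group $G$ with identity $e$ and a set $S\subseteq G\setminus\{e\}$ with $|S|=k$, an $S$-sequencing of $G$ is an ordering $(g_1,\dots,g_k)$ of the elements of $S$ (each used exactly once) such that the partial products $h_0=e$, $h_i=g_1g_2\cdots g_i$ ($1\le i\le k$) are pairwise distinct. *)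

(* Defs.v *)
From mathcomp Require Import all_boot all_fingroup.
Set Implicit Arguments. Unset Strict Implicit. Unset Printing Implicit Defensive.
Import GroupScope.
Open Scope group_scope.

Definition ordering_of (gT : finGroupType) (S : {set gT}) (s : seq gT) : bool :=
  perm_eq s (enum S).

Definition partial_prods (gT : finGroupType) (s : seq gT) : seq gT :=
  [seq \prod_(g <- take i s) g | i <- iota 0 (size s).+1].

Definition is_sequencing (gT : finGroupType) (S : {set gT}) (s : seq gT) : bool :=
  ordering_of S s && uniq (partial_prods s).

Definition form_i (gT : finGroupType) (S : {set gT}) : Prop :=
  #|S| = 4 /\ exists x y z : gT,
    S = [set x; x^-1; y; z] /\ x * y * z = 1 /\ x^-1 * z * y = 1.

Definition form_ii (gT : finGroupType) (S : {set gT}) : Prop :=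
  #|S| = 4 /\ exists w x y z : gT,
    S = [set w; x; y; z] /\ w * x * y = 1 /\ w * y * z = 1 /\
    w * z * x = 1 /\ x * z * y = 1.

(* Main.v *)
Require Import Defs.
From mathcomp Require Import all_boot all_fingroup.
Set Implicit Arguments. Unset Strict Implicit. Unset Printing Implicit Defensive.
Import GroupScope.
Open Scope group_scope.

Ltac gsimp := rewrite ?invg_eq1 ?invMg ?invgK -?mulgA ?mulKg ?mulKVg ?mulVg ?mulgV ?mul1g ?mulg1 ?invg1.
Ltac gs := do 4 gsimp.

Section S.
Variable gT : finGroupType.
Implicit Types p q r t x y z : gT.

Lemma pp4 p q r t : partial_prods [:: p; q; r; t] = [:: 1; p; p * q; p * q * r; p * q * r * t].
Proof. by rewrite /partial_prods /= !big_cons !big_nil !mulg1 !mulgA. Qed.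

Lemma pp3 p q r : partial_prods [:: p; q; r] = [:: 1; p; p * q; p * q * r].
Proof. by rewrite /partial_prods /= !big_cons !big_nil !mulg1 !mulgA. Qed.

Lemma cancl x y z : (x * y == x * z) = (y == z).
Proof. exact: (inj_eq (mulgI x)). Qed.

Lemma neq_r x y : y != 1 -> x != x * y.
Proof. by apply: contra => /eqP E; rewrite -(mulgI x y 1) // mulg1 -E. Qed.

Lemma neq_r2 x y z : y * z != 1 -> x != x * y * z.
Proof. by rewrite -mulgA; apply: neq_r. Qed.
Lemma neq_r3 x y z w : y * z * w != 1 -> x != x * y * z * w.
Proof. by rewrite -!mulgA mulgA; apply: neq_r. Qed.

Lemma uniq4 p q r t : p != 1 -> q != 1 -> r != 1 -> t != 1 ->
  p * q != 1 -> q * r != 1 -> r * t != 1 -> p * q * r != 1 -> q * r * t != 1 ->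
  p * q * r * t != 1 -> uniq (partial_prods [:: p; q; r; t]).
Proof.
move=> *; rewrite pp4 /= !inE !negb_or !(eq_sym 1) !andbT.
apply/and4P; split; [by apply/and4P|apply/and3P; split|apply/andP; split|].
- exact: neq_r.
- exact: neq_r2.
- exact: neq_r3.
- exact: neq_r.
- exact: neq_r2.
- exact: neq_r.
Qed.

Lemma uniq3 p q r : p != 1 -> q != 1 -> r != 1 ->
  p * q != 1 -> q * r != 1 -> p * q * r != 1 -> uniq (partial_prods [:: p; q; r]).
Proof.
move=> *; rewrite pp3 /= !inE !negb_or !(eq_sym 1) !andbT.
apply/and3P; split; [by apply/and3P|apply/andP; split|].
- exact: neq_r.
- exact: neq_r2.
- exact: neq_r.
Qed.

Lemma mulC1 x y : (x * y == 1) = (y * x == 1).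
Proof. by rewrite -!eq_invg_mul eq_sym -{1}[y]invgK (inj_eq invg_inj). Qed.

Lemma conj1 x a : (x * a * x^-1 == 1) = (a == 1).
Proof. by rewrite mulg_eq1 invgK -{2}[x]mulg1 (inj_eq (mulgI x)). Qed.

Lemma conjV1 x a : (x^-1 * (a * x) == 1) = (a == 1).
Proof. by rewrite mulgA -{2}[x]invgK conj1. Qed.

Definition Q (l : seq gT) := exists s', [/\ uniq s', s' =i l & uniq (partial_prods s')].

Lemma Q_eq l l' : l =i l' -> Q l -> Q l'.
Proof. by move=> E [s' [U E' P]]; exists s'; split => // u; rewrite E' E. Qed.

Lemma mkQ4 l p q r t : uniq [:: p; q; r; t] -> [:: p; q; r; t] =i l ->
  p != 1 -> q != 1 -> r != 1 -> t != 1 ->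
  p * q != 1 -> q * r != 1 -> r * t != 1 -> p * q * r != 1 -> q * r * t != 1 ->
  p * q * r * t != 1 -> Q l.
Proof. by move=> U E *; exists [:: p; q; r; t]; split => //; apply: uniq4. Qed.

End S.

Ltac dist := rewrite /= !inE !negb_or; repeat (apply/andP; split); try done; by rewrite eq_sym.
Ltac memt := let u := fresh "u" in move=> u; rewrite !inE; by do ![case: eqP => _ /=].

Ltac fin1 := first [ done | by rewrite invg_eq1 | by rewrite -eq_invg_mul | by rewrite -eq_invg_mul eq_sym
  | by rewrite mulg_eq1 invgK | by rewrite mulg_eq1 invgK eq_sym | by rewrite conj1
  | by rewrite -eq_invg_mul invgK | by rewrite -eq_invg_mul invgK eq_sym
  | by rewrite eq_sym | by rewrite mulC1 ].

Section T.
Variable gT : finGroupType.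
Implicit Types p q r t x y z a b c d : gT.

Lemma Qpos x y z : x != 1 -> y != 1 -> z != 1 -> x != x^-1 -> x != y -> x != z ->
  x^-1 != y -> x^-1 != z -> y != z -> y * z = x -> z * y = x -> Q [:: x; x^-1; y; z].
Proof.
move=> Hx Hy Hz Hxi Hxy Hxz Hiy Hiz Hyz Ey Ez.
have Eyxz : y * x * z = x * x by rewrite -{1}Ez mulgA -(mulgA (y * z)) Ey.
apply: (mkQ4 (p:=y) (q:=x) (r:=z) (t:=x^-1)).
  dist. memt.
all: try done.
- by rewrite invg_eq1.
- by rewrite mulC1 -eq_invg_mul.
- by rewrite -eq_invg_mul.
- by rewrite mulg_eq1 invgK eq_sym.
- by rewrite Eyxz -eq_invg_mul eq_sym.
- by rewrite conj1.
- by rewrite Eyxz mulgK.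
Qed.


Lemma coreB x y z : x != 1 -> y != 1 -> z != 1 -> x != x^-1 -> x != y -> x != z ->
  x^-1 != y -> x^-1 != z -> y != z -> y * z != 1 ->
  Q [:: x; x^-1; y; z] \/ (x * y * z = 1 /\ x^-1 * z * y = 1) \/
  (x^-1 * y * z = 1 /\ x * z * y = 1).
Proof.
move=> Hx Hy Hz Hxi Hxy Hxz Hiy Hiz Hyz H1.
have H2 : z * y != 1 by rewrite mulC1.
have Hx' : x^-1 != 1 by rewrite invg_eq1.
case: (eqVneq (y * z) x) => E1; last case: (eqVneq (y * z) x^-1) => E2.
- case: (eqVneq (z * y) x) => F1; first by left; apply: Qpos.
  case: (eqVneq (z * y) x^-1) => F2.
    by right; right; rewrite -mulgA E1 mulVg -mulgA F2 mulgV.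
  left; apply: (mkQ4 (p:=x) (q:=z) (r:=y) (t:=x^-1)).
  dist. memt.
  all: try done.
  + by rewrite -eq_invg_mul.
  + by rewrite mulg_eq1 invgK eq_sym.
  + by rewrite -mulgA -eq_invg_mul eq_sym.
  + by rewrite mulg_eq1 invgK.
  + by rewrite -(mulgA x) conj1.
- case: (eqVneq (z * y) x^-1) => F1.
    left; apply: (Q_eq _ (Qpos (x:=x^-1) _ _ _ _ _ _ _ _ _ E2 F1)); rewrite ?invgK //.
    + by memt.
    + by rewrite eq_sym.
  case: (eqVneq (z * y) x) => F2.
    by right; left; rewrite -mulgA E2 mulgV -mulgA F2 mulVg.
  left; apply: (mkQ4 (p:=x) (q:=z) (r:=y) (t:=x^-1)).
  dist. memt.
  all: try done.
  + by rewrite -eq_invg_mul.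
  + by rewrite mulg_eq1 invgK eq_sym.
  + by rewrite -mulgA -eq_invg_mul eq_sym.
  + by rewrite mulg_eq1 invgK.
  + by rewrite -(mulgA x) conj1.
- left; apply: (mkQ4 (p:=x) (q:=y) (r:=z) (t:=x^-1)).
  dist. memt.
  all: try done.
  + by rewrite -eq_invg_mul.
  + by rewrite mulg_eq1 invgK eq_sym.
  + by rewrite -mulgA -eq_invg_mul eq_sym.
  + by rewrite mulg_eq1 invgK.
  + by rewrite -(mulgA x) conj1.
Qed.

Lemma conjR1 x a : (x * (a * x^-1) == 1) = (a == 1).
Proof. by rewrite mulgA conj1. Qed.

Lemma rot3 x y z : x * y * z = 1 -> z * x * y = 1.
Proof.
move/eqP; rewrite -eq_invg_mul => /eqP <-.
by rewrite -mulgA mulVg.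
Qed.

Lemma coreC a b c d : a != 1 -> b != 1 -> c != 1 -> d != 1 ->
  a != b -> a != c -> a != d -> b != c -> b != d -> c != d ->
  a * b != 1 -> a * c != 1 -> a * d != 1 -> b * c != 1 -> b * d != 1 -> c * d != 1 ->
  a * b * c = 1 ->
  Q [:: a; b; c; d] \/ (a * b * c = 1 /\ a * c * d = 1 /\ a * d * b = 1 /\ b * d * c = 1).
Proof.
move=> Ha Hb Hc Hd Hab Hac Had Hbc Hbd Hcd Pab Pac Pad Pbc Pbd Pcd H.
have Ec : c = (a * b)^-1 by apply/eqP; rewrite eq_sym eq_invg_mul H.
have Pba : b * a != 1 by rewrite mulC1.
have Pca : c * a != 1 by rewrite mulC1.
have Pda : d * a != 1 by rewrite mulC1.
have Pcb : c * b != 1 by rewrite mulC1.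
have Pdb : d * b != 1 by rewrite mulC1.
have Pdc : d * c != 1 by rewrite mulC1.
case: (eqVneq (c * d * a) 1) => H1; last first.
  { left; apply: (mkQ4 (p:=b) (q:=c) (r:=d) (t:=a)).
  dist. memt.
  all: try done.
  all: rewrite ?Ec; gs; rewrite ?conjV1 ?conjR1 //; first [by rewrite -eq_mulVg1 // eq_sym | by rewrite mulg_eq1 invgK // eq_sym]. }
case: (eqVneq (b * d * c) 1) => H2; last first.
  { left; apply: (mkQ4 (p:=b) (q:=d) (r:=c) (t:=a)).
  dist. memt.
  all: try done.
  all: rewrite ?Ec; gs; rewrite ?conjV1 ?conjR1 //; first [by rewrite -eq_mulVg1 // eq_sym | by rewrite mulg_eq1 invgK // eq_sym]. }
case: (eqVneq (a * d * b) 1) => H3; last first.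
  { left; apply: (mkQ4 (p:=c) (q:=a) (r:=d) (t:=b)).
  dist. memt.
  all: try done.
  all: rewrite ?Ec; gs; rewrite ?conjV1 ?conjR1 //; first [by rewrite -eq_mulVg1 // eq_sym | by rewrite mulg_eq1 invgK // eq_sym]. }
right; split => //; split; first exact: rot3.
by split.
Qed.

Lemma useB (S : {set gT}) x y z : #|S| = 4 -> S =i [:: x; x^-1; y; z] -> ~ form_i S ->
  Q [:: x; x^-1; y; z] \/ (x * y * z = 1 /\ x^-1 * z * y = 1) \/
  (x^-1 * y * z = 1 /\ x * z * y = 1) -> Q [:: x; x^-1; y; z].
Proof.
move=> Hc HS Hf [//|[[E1 E2]|[E1 E2]]]; exfalso; apply: Hf; split => //.
  exists x, y, z; split => //; apply/setP => u; rewrite HS !inE.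
  by do ![case: eqP => _ /=].
exists x^-1, y, z; rewrite invgK; split => //; apply/setP => u; rewrite HS !inE.
by do ![case: eqP => _ /=].
Qed.

Lemma useC (S : {set gT}) a b c d : #|S| = 4 -> S =i [:: a; b; c; d] -> ~ form_ii S ->
  Q [:: a; b; c; d] \/ (a * b * c = 1 /\ a * c * d = 1 /\ a * d * b = 1 /\ b * d * c = 1) ->
  Q [:: a; b; c; d].
Proof.
move=> Hc HS Hf [//|[E1 [E2 [E3 E4]]]]; exfalso; apply: Hf; split => //.
exists a, b, c, d; split => //; apply/setP => u; rewrite HS !inE.
by do ![case: eqP => _ /=].
Qed.

End T.

Theorem theorem2p1 (gT : finGroupType) (S : {set gT}) :
  1 \notin S ->
  (#|S| <= 4)%N ->
  (exists s : seq gT, ordering_of S s /\ \prod_(g <- s) g != 1) ->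
  ~ form_i S ->
  ~ form_ii S ->
  exists s : seq gT, is_sequencing S s.
Proof.
move=> H1S Hcard [s [Hs Hp]] Hfi Hfii.
have Hsz : size s = #|S| by rewrite cardE (perm_size Hs).
have Hu : uniq s by rewrite (perm_uniq Hs) enum_uniq.
have Hmem : S =i s by move=> u; rewrite -mem_enum (perm_mem Hs).
have Hn1 : forall u, u \in s -> u != 1.
  by move=> u Hu'; apply: contraNneq H1S => <-; rewrite Hmem.
suff HQ : Q s.
  case: HQ => s' [U E P]; exists s'; apply/andP; split => //.
  by apply: uniq_perm => // [|u]; rewrite ?enum_uniq // mem_enum Hmem E.
rewrite /ordering_of in Hs.
case: s Hs Hp Hsz Hu Hmem Hn1 => [|p [|q [|r [|t [|v s]]]]] Hs Hp Hsz Hu Hmem Hn1.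
- by exists [::]; split => //; rewrite /partial_prods /= big_nil.
- exists [:: p]; split => //; rewrite /partial_prods /= !big_cons !big_nil mulg1 /= inE andbT eq_sym.
  by apply: Hn1; rewrite inE.
- have Hp1 : p != 1 by apply: Hn1; rewrite !inE eqxx.
  have Hq1 : q != 1 by apply: Hn1; rewrite !inE eqxx orbT.
  rewrite !big_cons big_nil mulg1 in Hp.
  exists [:: p; q]; split => //; rewrite /partial_prods /= !big_cons !big_nil !mulg1 /= !inE !negb_or !(eq_sym 1).
  by rewrite Hp1 Hp (neq_r _ Hq1).
- have Hp1 : p != 1 by apply: Hn1; rewrite !inE eqxx.
  have Hq1 : q != 1 by apply: Hn1; rewrite !inE eqxx !orbT.
  have Hr1 : r != 1 by apply: Hn1; rewrite !inE eqxx !orbT.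
  rewrite !big_cons big_nil mulg1 mulgA in Hp.
  move: Hu; rewrite /= !inE !negb_or andbT => /andP [/andP [Hpq Hpr] Hqr].
  case: (eqVneq (p * q) 1) => E1.
    have Eq : q = p^-1 by apply/eqP; rewrite eq_sym eq_invg_mul E1.
    subst q; exists [:: p; r; p^-1]; split; first by dist.
      by memt.
    by apply: uniq3; fin1.
  case: (eqVneq (q * r) 1) => E2.
    have Er : r = q^-1 by apply/eqP; rewrite eq_sym eq_invg_mul E2.
    subst r; exists [:: q; p; q^-1]; split; first by dist.
      by memt.
    by apply: uniq3; fin1.
  by exists [:: p; q; r]; split; [dist | move=> u | apply: uniq3].
- have Hp1 : p != 1 by apply: Hn1; rewrite !inE eqxx.
  have Hq1 : q != 1 by apply: Hn1; rewrite !inE eqxx !orbT.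
  have Hr1 : r != 1 by apply: Hn1; rewrite !inE eqxx !orbT.
  have Ht1 : t != 1 by apply: Hn1; rewrite !inE eqxx !orbT.
  have H4 : #|S| = 4 by rewrite -Hsz.
  rewrite !big_cons big_nil mulg1 !mulgA in Hp.
  move: Hu; rewrite /= !inE !negb_or andbT => /and3P [/and3P [Hpq Hpr Hpt] /andP [Hqr Hqt] Hrt].
  have Hm : forall l, S =i l -> l =i [:: p; q; r; t] -> l =i [:: p; q; r; t] by [].
  case: (eqVneq (p * q) 1) => E1.
    { have Eq : q = p^-1 by apply/eqP; rewrite eq_sym eq_invg_mul E1.
    subst q.
    case: (eqVneq (r * t) 1) => E2.
      { by move: Hp; rewrite mulgV mul1g E2 eqxx. }
    apply: (Q_eq _ (useB (S:=S) (x:=p) (y:=r) (z:=t) _ _ Hfi (coreB _ _ _ _ _ _ _ _ _ _))).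
    all: try (let u := fresh "u" in move=> u; rewrite ?Hmem !inE; by do ![case: eqP => _ /=]).
    all: fin1. }
  case: (eqVneq (p * r) 1) => E1'.
    { have Er : r = p^-1 by apply/eqP; rewrite eq_sym eq_invg_mul E1'.
    subst r.
    case: (eqVneq (q * t) 1) => E2.
      { have Et : t = q^-1 by apply/eqP; rewrite eq_sym eq_invg_mul E2.
      subst t.
      apply: (mkQ4 (p:=p) (q:=q) (r:=p^-1) (t:=q^-1)) => //; first by dist.
      all: fin1. }
    apply: (Q_eq _ (useB (S:=S) (x:=p) (y:=q) (z:=t) _ _ Hfi (coreB _ _ _ _ _ _ _ _ _ _))).
    all: try (let u := fresh "u" in move=> u; rewrite ?Hmem !inE; by do ![case: eqP => _ /=]).
    all: fin1. }
  case: (eqVneq (p * t) 1) => E1''.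
    { have Et : t = p^-1 by apply/eqP; rewrite eq_sym eq_invg_mul E1''.
    subst t.
    case: (eqVneq (q * r) 1) => E2.
      { by move: Hp; rewrite -(mulgA p q r) E2 mulg1 mulgV eqxx. }
    apply: (Q_eq _ (useB (S:=S) (x:=p) (y:=q) (z:=r) _ _ Hfi (coreB _ _ _ _ _ _ _ _ _ _))).
    all: try (let u := fresh "u" in move=> u; rewrite ?Hmem !inE; by do ![case: eqP => _ /=]).
    all: fin1. }
  case: (eqVneq (q * r) 1) => E2.
    { have Er : r = q^-1 by apply/eqP; rewrite eq_sym eq_invg_mul E2.
    subst r.
    apply: (Q_eq _ (useB (S:=S) (x:=q) (y:=p) (z:=t) _ _ Hfi (coreB _ _ _ _ _ _ _ _ _ _))).
    all: try (let u := fresh "u" in move=> u; rewrite ?Hmem !inE; by do ![case: eqP => _ /=]).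
    all: fin1. }
  case: (eqVneq (q * t) 1) => E2'.
    { have Et : t = q^-1 by apply/eqP; rewrite eq_sym eq_invg_mul E2'.
    subst t.
    apply: (Q_eq _ (useB (S:=S) (x:=q) (y:=p) (z:=r) _ _ Hfi (coreB _ _ _ _ _ _ _ _ _ _))).
    all: try (let u := fresh "u" in move=> u; rewrite ?Hmem !inE; by do ![case: eqP => _ /=]).
    all: fin1. }
  case: (eqVneq (r * t) 1) => E3.
    { have Et : t = r^-1 by apply/eqP; rewrite eq_sym eq_invg_mul E3.
    subst t.
    apply: (Q_eq _ (useB (S:=S) (x:=r) (y:=p) (z:=q) _ _ Hfi (coreB _ _ _ _ _ _ _ _ _ _))).
    all: try (let u := fresh "u" in move=> u; rewrite ?Hmem !inE; by do ![case: eqP => _ /=]).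
    all: fin1. }
  case: (eqVneq (p * q * r) 1) => F1.
    { apply: (Q_eq _ (useC (S:=S) (a:=p) (b:=q) (c:=r) (d:=t) _ _ Hfii (coreC _ _ _ _ _ _ _ _ _ _ _ _ _ _ _ _ _))).
    all: try (let u := fresh "u" in move=> u; rewrite ?Hmem !inE; by do ![case: eqP => _ /=]).
    all: fin1. }
  case: (eqVneq (q * r * t) 1) => F2.
    { apply: (Q_eq _ (useC (S:=S) (a:=q) (b:=r) (c:=t) (d:=p) _ _ Hfii (coreC _ _ _ _ _ _ _ _ _ _ _ _ _ _ _ _ _))).
    all: try (let u := fresh "u" in move=> u; rewrite ?Hmem !inE; by do ![case: eqP => _ /=]).
    all: fin1. }
  by apply: (mkQ4 (p:=p) (q:=q) (r:=r) (t:=t)) => //; dist.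
- by move: Hcard; rewrite -Hsz.
Qed.
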